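(* Let $n\ge2$, $k\ge1$, $i_1,\dots,i_k\in\{1,\dots,n-1\}$, $j\in\{1,\dots,k\}$, and fix integers $a_h$ for $h\neq j$. For $e\in\mathbb{Z}$ let $V_n(e)=V_n(x_{i_1}^{a_1}\cdots x_{i_{j-1}}^{a_{j-1}}x_{i_j}^{e}x_{i_{j+1}}^{a_{j+1}}\cdots x_{i_k}^{a_k})$. Then for all sufficiently large $e$, $V_n(e)$ is a polynomial in $s$, and $\lim_{e\to\infty}\deg V_n(e)=+\infty$.
   Context: $\mathcal{B}_n$ is the Artin braid group with standard generators $x_1,\dots,x_{n-1}$; $\widehat{\beta}$ is the closure of a braid. The Jones polynomial is normalized by $V(\text{unknot})=1$ and $q^{-1}V_{L_+}-qV_{L_-}=(q^{1/2}-q^{-1/2})V_{L_0}$; with $s=q^{-1/2}$ it is a Laurent polynomial in $s$, and $V_n(\beta)=V(\widehat\beta)$. Conventions: closures of $\alpha x_i^{e+2}\gamma$, $\alpha x_i^{e+1}\gamma$, $\alpha x_i^{e}\gamma$ play the roles of $L_-,L_0,L_+$ (e.g. $V_2(x_1^2)=-s-s^5$). For a nonzero Laurent polynomial, $\deg$ is its highest exponent of $s$. *)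

(* Defs.v *)
From HB Require Import structures.
From mathcomp Require Import all_boot all_order all_algebra fraction.
Set Implicit Arguments. Unset Strict Implicit. Unset Printing Implicit Defensive.
Import Order.TTheory GRing.Theory Num.Theory.
Local Open Scope ring_scope.

(* Braid words.  A letter (i, true) stands for the Artin generator x_i and   *)
(* (i, false) for x_i^{-1}; strands are numbered 0..n-1 and x_i (1 <= i <=   *)
(* n-1) crosses strands i-1 and i.                                           *)
Definition letter := (nat * bool)%type.

Definition gpow (i : nat) (a : int) : seq letter := nseq `|a|%N (i, (0 <= a)).

Definition bword (k : nat) (i : 'I_k -> nat) (a : 'I_k -> int) : seq letter :=
  flatten [seq gpow (i h) (a h) | h <- enum 'I_k].

(* A state S : (size w).-tuple bool assigns to crossing t the A-smoothing    *)
(* (true) or the B-smoothing (false).  For a letter x_i (a NEGATIVE crossing *)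
(* in the convention of the paper, where x_i^{e+2}, x_i^{e+1}, x_i^{e} give  *)
(* L_-, L_0, L_+) the A-smoothing is the horizontal (cup/cap) one, for       *)
(* x_i^{-1} it is the vertical (identity) one.                               *)
Section Closure.
Variables (n : nat) (w : seq letter).
Let m := size w.
Variable S : m.-tuple bool.

Definition gen_at (t : nat) : nat := (nth (0%N, true) w t).1.
Definition sgn_at (t : nat) : bool := (nth (0%N, true) w t).2.
(* crossing t is smoothed horizontally (cup at level t, cap at level t+1) *)
Definition hor (t : nat) : bool := (t < m)%N && (nth false S t == sgn_at t).
Definition inv (t p : nat) : bool := (p == (gen_at t).-1) || (p == gen_at t).

(* vertices: points (t, p) at level t in 0..m on strand p; level m is glued  *)
(* back to level 0 by the closure arcs.                                     *)
Definition sm_edge0 (u v : 'I_m.+1 * 'I_n) : bool :=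
  let t := nat_of_ord u.1 in let p := nat_of_ord u.2 in
  let t' := nat_of_ord v.1 in let p' := nat_of_ord v.2 in
  [|| [&& t == m, t' == 0%N & p == p'],
      [&& t' == t.+1, p == p' & ~~ (hor t && inv t p)],
      [&& t' == t, hor t, inv t p, inv t p' & p != p']        (* cup at level t *)
    | [&& t' == t, (0 < t)%N, hor t.-1, inv t.-1 p, inv t.-1 p' & p != p'] ].
                                                            (* cap at level t *)
Definition sm_edge : rel ('I_m.+1 * 'I_n) :=
  fun u v => sm_edge0 u v || sm_edge0 v u.

Definition nloops : nat := n_comp sm_edge predT.
End Closure.

(* Laurent polynomials in s are viewed inside the fraction field of Z[s]. *)
Notation laurent := {fraction {poly int}}.
Definition tof (P : {poly int}) : laurent := @FracField.tofrac _ P.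
Definition svar : laurent := tof 'X.

(* Jones polynomial V_n(w) = V(closure of w) in the variable s = q^{-1/2}   *)
(* (so A^2 = s for the Kauffman variable A):                                *)
(*   V = (-A^3)^{-wr} sum_S A^{#A - #B} delta^{L(S)-1},  delta = -A^2-A^-2,  *)
(* where wr = #x_i^{-1} - #x_i is the writhe.  With p = #x_i^{-1} and       *)
(* q = #x_i letters one has (#A - #B - 3 wr)/2 = #A - 2p + q.               *)
Definition jones (n : nat) (w : seq letter) : laurent :=
  let m := size w in
  let q : int := (count (fun l : letter => l.2) w)%:Z in
  let p : int := (count (fun l : letter => ~~ l.2) w)%:Z in
  let wr : int := p - q in
  let delta : laurent := - (svar + svar^-1) in
  \sum_(S : m.-tuple bool)
     ((-1) ^ wr * svar ^ ((count id S)%:Z - 2 * p + q)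
      * delta ^+ (nloops n S).-1).

Definition is_poly_in_s (L : laurent) : Prop :=
  exists P : {poly int}, L = tof P.

Definition has_sdeg (L : laurent) (d : int) : Prop :=
  exists (P : {poly int}) (c : int),
    [/\ P != 0, L = svar ^ c * tof P & d = c + ((size P)%:Z - 1)].

(* Main.v *)
Require Import Defs.
From HB Require Import structures.
From mathcomp Require Import all_boot all_order all_algebra fraction.
From mathcomp Require Import zify ring.
From Stdlib Require Import Classical.
Import Order.TTheory GRing.Theory Num.Theory.
Set Implicit Arguments. Unset Strict Implicit. Unset Printing Implicit Defensive.
Definition horS (w : seq letter) (s : seq bool) (t : nat) : bool :=
  (t < size w) && (nth false s t == sgn_at w t).
Definition e0 w s (t p t' p' : nat) : bool :=
  [|| [&& t == size w, t' == 0 & p == p'],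
      [&& t' == t.+1, p == p' & ~~ (horS w s t && Defs.inv w t p)],
      [&& t' == t, horS w s t, Defs.inv w t p, Defs.inv w t p' & p != p']
    | [&& t' == t, 0 < t, horS w s t.-1, Defs.inv w t.-1 p, Defs.inv w t.-1 p' & p != p'] ].
Definition G n w s : rel ('I_(size w).+1 * 'I_n) :=
  fun u v => e0 w s u.1 u.2 v.1 v.2 || e0 w s v.1 v.2 u.1 u.2.
Arguments G : clear implicits.
Definition nl n w s := n_comp (G n w s) predT.
Lemma nloopsE n w (S : (size w).-tuple bool) : nloops n S = nl n w S.
Proof. reflexivity. Qed.
Lemma transfer (T T' : finType) (e : rel T) (e' : rel T') (h : T' -> T) (h' : T -> T') (a : {pred T}) :
  symmetric e -> symmetric e' -> closed e a ->
  (forall x', h x' \in a) ->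
  (forall x, x \in a -> connect e x (h (h' x))) ->
  (forall x y, x \in a -> y \in a -> e x y -> connect e' (h' x) (h' y)) ->
  (forall x', connect e' x' (h' (h x'))) ->
  (forall x' y', e' x' y' -> connect e (h x') (h y')) ->
  n_comp e a = n_comp e' predT.
Proof.
move=> se se' cla ha H1 H2 H3 H4.
have sce := sym_connect_sym se; have sce' := sym_connect_sym se'.
rewrite (adjunction_n_comp h sce sce' cla); last first.
  apply: (@intro_adjunction _ _ h e e' sce' a cla (fun x _ => h' x)).
  - move=> x ax; split; first exact: H1.
    move=> y ay exy; exact: H2.
  - move=> x' ax; split; first exact: H3.
    exact: H4.
by apply: eq_n_comp_r => x; rewrite !inE ha.
Qed.

Section Nat.
Variables (n : nat) (w : seq letter) (s : seq bool).
Definition X t p : 'I_(size w).+1 * 'I_n.+1 := (inord t, inord p).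
Definition C t p t' p' := connect (G n.+1 w s) (X t p) (X t' p').

Lemma XK (x : 'I_(size w).+1 * 'I_n.+1) : X x.1 x.2 = x.
Proof. by case: x => a b; rewrite /X !inord_val. Qed.

Lemma G_sym : symmetric (G n.+1 w s).
Proof. by move=> x y; rewrite /G orbC. Qed.

Lemma Cedge t p t' p' : t <= size w -> p <= n -> t' <= size w -> p' <= n ->
  e0 w s t p t' p' -> C t p t' p'.
Proof.
move=> ht hp ht' hp' he; apply: connect1; rewrite /G /X /=.
by rewrite !inordK ?ltnS // he.
Qed.

Lemma Csym t p t' p' : C t p t' p' -> C t' p' t p.
Proof. by rewrite /C (sym_connect_sym G_sym). Qed.

Lemma Ctrans t p t1 p1 t' p' : C t p t1 p1 -> C t1 p1 t' p' -> C t p t' p'.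
Proof. exact: connect_trans. Qed.

Lemma Crefl t p : C t p t p.
Proof. exact: connect0. Qed.

Lemma Cclos p : p <= n -> C (size w) p 0 p.
Proof. by move=> hp; apply: Cedge => //; rewrite /e0 !eqxx. Qed.

Lemma Cvert t p : t < size w -> p <= n -> ~~ (horS w s t && Defs.inv w t p) -> C t p t.+1 p.
Proof.
move=> ht hp hv; apply: Cedge => //; first exact: ltnW.
by rewrite /e0 !eqxx hv /= orbT.
Qed.

Lemma horS_lt t : horS w s t -> t < size w.
Proof. by case/andP. Qed.

Lemma Ccup t p p' : p <= n -> p' <= n -> horS w s t -> Defs.inv w t p -> Defs.inv w t p' ->
  p != p' -> C t p t p'.
Proof.
move=> hp hp' hh h1 h2 h3; have ht := ltnW (horS_lt hh).
by apply: Cedge => //; rewrite /e0 hh h1 h2 h3 eqxx /= !orbT.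
Qed.

Lemma Ccap c p p' : p <= n -> p' <= n -> horS w s c -> Defs.inv w c p -> Defs.inv w c p' ->
  p != p' -> C c.+1 p c.+1 p'.
Proof.
move=> hp hp' hh h1 h2 h3; have ht := horS_lt hh.
by apply: Cedge => //; rewrite /e0 /= hh h1 h2 h3 eqxx /= !orbT.
Qed.

Variant e0_spec t p t' p' : Prop :=
| ES_clos of t = size w & t' = 0 & p' = p
| ES_vert of t' = t.+1 & p' = p & ~~ (horS w s t && Defs.inv w t p)
| ES_cup of t' = t & horS w s t & Defs.inv w t p & Defs.inv w t p' & p != p'
| ES_cap c of t = c.+1 & t' = c.+1 & horS w s c & Defs.inv w c p & Defs.inv w c p' & p != p'.

Lemma e0P t p t' p' : e0 w s t p t' p' -> e0_spec t p t' p'.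
Proof.
rewrite /e0; case/or4P.
- by case/and3P => /eqP -> /eqP -> /eqP ->; apply: ES_clos.
- by case/and3P => /eqP -> /eqP -> ?; apply: ES_vert.
- by case/and5P => /eqP -> *; apply: ES_cup.
- case/and5P => /eqP -> ht h1 h2 /andP[h3 h4].
  by case: t ht h1 h2 h3 => // c _ *; apply: (@ES_cap _ _ _ _ c).
Qed.
End Nat.

Lemma transfer_nat n w s w' s' (f g : nat -> nat) (a : nat -> nat -> bool) :
 (forall t, t <= size w' -> f t <= size w) ->
 (forall t, t <= size w -> g t <= size w') ->
 (forall t p t' p', t <= size w -> p <= n -> t' <= size w -> p' <= n ->
    e0 w s t p t' p' -> a t p = a t' p') ->
 (forall t p, t <= size w' -> p <= n -> a (f t) p) ->
 (forall t p, t <= size w -> p <= n -> a t p -> C n w s t p (f (g t)) p) ->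
 (forall t p t' p', t <= size w -> p <= n -> t' <= size w -> p' <= n ->
    a t p -> a t' p' -> e0 w s t p t' p' -> C n w' s' (g t) p (g t') p') ->
 (forall t p, t <= size w' -> p <= n -> C n w' s' t p (g (f t)) p) ->
 (forall t p t' p', t <= size w' -> p <= n -> t' <= size w' -> p' <= n ->
    e0 w' s' t p t' p' -> C n w s (f t) p (f t') p') ->
 n_comp (G n.+1 w s) [pred x : 'I_(size w).+1 * 'I_n.+1 | a x.1 x.2] = nl n.+1 w' s'.
Proof.
move=> hf hg hcl ha H1 H2 H3 H4.
have bt (m : nat) (x : 'I_m.+1) : x <= m by rewrite -ltnS.
apply: (@transfer _ _ (G n.+1 w s) (G n.+1 w' s') (fun x : 'I_(size w').+1 * 'I_n.+1 => X n w (f x.1) x.2)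
  (fun x : 'I_(size w).+1 * 'I_n.+1 => X n w' (g x.1) x.2)).
- exact: G_sym.
- exact: G_sym.
- move=> x y; rewrite /G !inE => /orP[] he.
    by apply: hcl => //; apply: bt.
  by apply/esym; apply: hcl => //; apply: bt.
- move=> x; rewrite inE /X /= !inordK ?ltnS ?bt //; first by apply: ha; apply: bt.
  by apply: hf; apply: bt.
- move=> x ax /=; rewrite inord_val.
  have e1 : (inord (g x.1) : 'I_(size w').+1) = g x.1 :> nat by rewrite inordK // ltnS hg ?bt.
  rewrite e1 -{1}(XK x); apply: H1; rewrite ?bt //.
- move=> x y ax ay; rewrite inE in ax ay; rewrite /G => /orP[] he.
    by apply: H2 => //; apply: bt.
  by apply: (Csym (n := n)); apply: H2 => //; apply: bt.
- move=> x /=; rewrite inord_val.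
  have e1 : (inord (f x.1) : 'I_(size w).+1) = f x.1 :> nat by rewrite inordK // ltnS hf ?bt.
  by rewrite e1 -{1}(XK x); apply: H3; rewrite ?bt.
- move=> x y; rewrite /G => /orP[] he.
    by apply: H4 => //; apply: bt.
  by apply: (Csym (n := n)); apply: H4 => //; apply: bt.
Qed.
Ltac kill := try (exfalso; lia).
Ltac ifs := repeat match goal with
 | |- context [if ?b then _ else _] => let E := fresh "E" in destruct b eqn:E; kill
 | H : context [if ?b then _ else _] |- _ => let E := fresh "E" in destruct b eqn:E; kill
end.

Section Del.
Variables (n : nat) (w w' : seq letter) (s s' : seq bool) (r0 : nat).
Hypothesis Hsz : size w = (size w').+1.
Hypothesis Hr : r0 < size w.
Hypothesis Hh : forall t, horS w' s' t = horS w s (if t < r0 then t else t.+1).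
Hypothesis Hi : forall t p, Defs.inv w' t p = Defs.inv w (if t < r0 then t else t.+1) p.

Definition ff t := if t <= r0 then t else t.+1.
Definition gg t := if t <= r0 then t else t.-1.

Lemma ff_bd t : t <= size w' -> ff t <= size w.
Proof. by rewrite /ff; ifs; lia. Qed.
Lemma gg_bd t : t <= size w -> gg t <= size w'.
Proof. by rewrite /gg; ifs; lia. Qed.
Lemma gfK t : gg (ff t) = t.
Proof. rewrite /ff; case: leqP => h; rewrite /gg; ifs; lia. Qed.

Lemma delV (HV : ~~ horS w s r0) : nl n.+1 w s = nl n.+1 w' s'.
Proof.
have HV' : horS w s r0 = false by apply: negbTE.
rewrite /nl (@eq_n_comp_r _ _ _ [pred x : 'I_(size w).+1 * 'I_n.+1 | (fun _ _ => true) x.1 x.2]) //.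
apply: (@transfer_nat n w s w' s' ff gg (fun _ _ => true)) => //.
- exact: ff_bd.
- exact: gg_bd.
- move=> t p ht hp _; rewrite /ff /gg.
  case: (leqP t r0) => h1; first by rewrite h1; apply: Crefl.
  case: (ltngtP t r0.+1) => h2; [lia | |].
  + have -> : t.-1 <= r0 = false by lia.
    have -> : t.-1.+1 = t by lia. exact: Crefl.
  + subst t; rewrite /= leqnn; apply: Csym; apply: Cvert => //.
    by rewrite HV'.
- move=> t p t' p' ht hp ht' hp' _ _ /e0P [].
  + move=> ? ? ?; subst; rewrite /gg; ifs.
    have -> : (size w).-1 = size w' by lia.
    exact: Cclos.
  + move=> ? ? hv; subst; rewrite /gg; case: (ltngtP t r0) => h1.
    * ifs; apply: Cvert => //; first lia.
      by rewrite Hh Hi; ifs.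
    * destruct t as [|c]; first lia; ifs; rewrite /=.
      apply: Cvert => //; first lia.
      by rewrite Hh Hi; ifs.
    * by subst t; ifs; apply: Crefl.
  + move=> ? hh h1 h2 h3; subst; rewrite /gg; case: (ltngtP t r0) => e1.
    * by ifs; apply: Ccup => //; rewrite ?Hh ?Hi; ifs.
    * destruct t as [|c]; first lia; ifs; rewrite /=.
      by apply: Ccup => //; rewrite ?Hh ?Hi; ifs.
    * by subst t; rewrite HV' in hh.
  + move=> c ? ? hh h1 h2 h3; subst; rewrite /gg; case: (ltngtP c r0) => e1.
    * by ifs; apply: Ccap => //; rewrite ?Hh ?Hi; ifs.
    * destruct c as [|c]; first lia; ifs; rewrite /=.
      by apply: Ccap => //; rewrite ?Hh ?Hi; ifs.
    * by subst c; rewrite HV' in hh.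
- by move=> t p _ _; rewrite gfK; apply: Crefl.
- move=> t p t' p' ht hp ht' hp' /e0P [].
  + move=> ? ? ?; subst; rewrite /ff; ifs.
    * have e1 : r0 = size w' by lia.
      apply: (@Ctrans _ _ _ _ _ (size w) p); last exact: Cclos.
      rewrite Hsz; apply: Cvert => //; first lia.
      by rewrite -e1 HV'.
    * by rewrite -Hsz; apply: Cclos.
  + move=> ? ? hv; subst; rewrite Hh Hi in hv; rewrite /ff; case: (ltngtP t r0) => e1.
    * by ifs; apply: Cvert => //; lia.
    * by ifs; apply: Cvert => //; lia.
    * subst t; ifs.
      apply: (@Ctrans _ _ _ _ _ r0.+1 p).
        by apply: Cvert => //; rewrite HV'.
      by apply: Cvert => //; lia.
  + move=> ? hh h1 h2 h3; subst; rewrite ?Hh ?Hi in hh h1 h2; rewrite /ff; case: (ltngtP t r0) => e1.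
    * by ifs; apply: Ccup.
    * by ifs; apply: Ccup.
    * subst t; ifs.
      apply: (@Ctrans _ _ _ _ _ r0.+1 p).
        by apply: Cvert => //; rewrite HV'.
      apply: (@Ctrans _ _ _ _ _ r0.+1 p'); first by apply: Ccup.
      by apply: Csym; apply: Cvert => //; rewrite HV'.
  + move=> c ? ? hh h1 h2 h3; subst; rewrite ?Hh ?Hi in hh h1 h2; rewrite /ff; case: (ltnP c r0) => e1.
    * by ifs; apply: Ccap.
    * by ifs; apply: Ccap.
Qed.
End Del.
Section DelH.
Variables (n : nat) (w w' : seq letter) (s s' : seq bool) (r : nat).
Hypothesis Hsz : size w = (size w').+1.
Hypothesis Hr : r.+1 < size w.
Hypothesis Hh : forall t, horS w' s' t = horS w s (if t < r.+1 then t else t.+1).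
Hypothesis Hi : forall t p, Defs.inv w' t p = Defs.inv w (if t < r.+1 then t else t.+1) p.
Hypothesis H0 : horS w s r.
Hypothesis H1 : horS w s r.+1.
Hypothesis Iv : forall p, Defs.inv w r.+1 p = Defs.inv w r p.
Hypothesis Hg : 1 <= gen_at w r <= n.

Definition fH t := if t < r.+1 then t else t.+1.
Definition gH t := if t < r.+1 then t else t.-1.
Definition LL t p := (t == r.+1) && Defs.inv w r p.

Lemma LL_cl t p t' p' : e0 w s t p t' p' -> LL t p = LL t' p'.
Proof.
rewrite /LL; case/e0P => [? ? ?|? ? hv|? hh h1 h2 h3|c ? ? hh h1 h2 h3]; subst.
- by have -> : (size w == r.+1) = false by apply/negbTE; lia.
- have -> : (t == r.+1) && Defs.inv w r p = false.
    case: eqP => // ?; subst; move: hv; rewrite H1 Iv /=; by case: (Defs.inv w r p).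
  case: eqP => //= -[?]; subst; move: hv; rewrite H0 /=; by case: (Defs.inv w r p).
- case: eqP => //= ?; subst; by rewrite -!Iv h1 h2.
- case: eqP => //= -[?]; subst; by rewrite h1 h2.
Qed.

Lemma delH : nl n.+1 w s = (nl n.+1 w' s').+1.
Proof.
have sG := sym_connect_sym (@G_sym n w s).
pose Lp := [pred x : 'I_(size w).+1 * 'I_n.+1 | LL x.1 x.2].
have bt (m : nat) (x : 'I_m.+1) : x <= m by rewrite -ltnS.
have clL : closed (G n.+1 w s) Lp.
  move=> x y; rewrite /G !inE => /orP[] he; first exact: LL_cl.
  by apply/esym; apply: LL_cl.
have eT : n_comp (G n.+1 w s) predT = n_comp (G n.+1 w s) Lp + n_comp (G n.+1 w s) [predC Lp].
  by rewrite -n_compC; apply: eq_n_comp_r.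
rewrite /nl eT.
set g0 := gen_at w r.
have hI : forall p, Defs.inv w r p = (p == g0.-1) || (p == g0) by [].
have L1 : n_comp (G n.+1 w s) Lp = 1.
  rewrite -(n_comp_connect sG (X n w r.+1 g0.-1)); apply: eq_n_comp_r => y.
  rewrite !inE; apply/idP/idP => hy.
  - rewrite -(XK y); move: hy; rewrite /LL => /andP[/eqP e1]; rewrite hI e1 => /orP[] /eqP ->.
      exact: Crefl.
    apply: Ccup => //; first lia; first lia; first by rewrite Iv hI eqxx.
      by rewrite Iv hI eqxx orbT.
    lia.
  - have := closed_connect clL hy; rewrite !inE /X /= !inordK ?ltnS /LL; try lia.
    by move=> <-; rewrite eqxx hI eqxx.
rewrite L1 add1n; congr _.+1.
rewrite (@eq_n_comp_r _ _ _ [pred x : 'I_(size w).+1 * 'I_n.+1 | (fun t p => ~~ LL t p) x.1 x.2]) //.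
apply: (@transfer_nat n w s w' s' fH gH (fun t p => ~~ LL t p)) => //.
- by move=> t ht; rewrite /fH; ifs; lia.
- by move=> t ht; rewrite /gH; ifs; lia.
- by move=> t p t' p' _ _ _ _ /LL_cl ->.
- by move=> t p _ _; rewrite /fH /LL; ifs; apply/negP => /andP[/eqP ? _]; lia.
- move=> t p ht hp hL; rewrite /fH /gH; case: (ltngtP t r.+1) => et.
  + by ifs; apply: Crefl.
  + ifs; have -> : t.-1.+1 = t by lia.
    exact: Crefl.
  + subst t; ifs; rewrite /LL eqxx /= in hL; apply: Csym; apply: Cvert => //=.
    by rewrite H0.
- move=> t p t' p' ht hp ht' hp' a1 a2 /e0P [].
  + move=> ? ? ?; subst; rewrite /gH; ifs.
    have -> : (size w).-1 = size w' by lia.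
    exact: Cclos.
  + move=> ? ? hv; subst; rewrite /gH; case: (ltngtP t r) => e1.
    * ifs; apply: Cvert => //; first lia.
      by rewrite Hh Hi; ifs.
    * destruct t as [|c]; first lia.
      case: (ltngtP c r) => e2; first lia.
      -- ifs; rewrite /=; apply: Cvert => //; first lia.
         by rewrite Hh Hi; ifs.
      -- subst; ifs; rewrite /=; apply: Cvert => //; first lia.
         by rewrite Hh Hi; ifs; rewrite -Iv; move: hv; rewrite H1 H0.
    * by subst t; ifs; apply: Crefl.
  + move=> ? hh h1 h2 h3; subst; rewrite /gH; case: (ltngtP t r.+1) => e1.
    * by ifs; apply: Ccup => //; rewrite ?Hh ?Hi; ifs.
    * destruct t as [|c]; first lia; ifs; rewrite /=.
      by apply: Ccup => //; rewrite ?Hh ?Hi; ifs.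
    * by subst t; move: a1; rewrite /LL eqxx -Iv h1.
  + move=> c ? ? hh h1 h2 h3; subst; rewrite /gH; case: (ltngtP c r) => e1.
    * by ifs; apply: Ccap => //; rewrite ?Hh ?Hi; ifs.
    * destruct c as [|c]; first lia.
      case: (ltngtP c r) => e2; first lia.
      -- by ifs; rewrite /=; apply: Ccap => //; rewrite ?Hh ?Hi; ifs.
      -- subst; ifs; rewrite /=; apply: Ccap => //; rewrite ?Hh ?Hi; ifs; by rewrite // -Iv.
    * by subst c; move: a1; rewrite /LL eqxx h1.
- move=> t p _ _; rewrite /fH /gH; ifs; rewrite /=; exact: Crefl.
- move=> t p t' p' ht hp ht' hp' /e0P [].
  + move=> ? ? ?; subst; rewrite /fH; ifs.
    by rewrite -Hsz; apply: Cclos.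
  + move=> ? ? hv; subst; rewrite Hh Hi in hv; rewrite /fH; case: (ltngtP t r) => e1.
    * by ifs; apply: Cvert => //; lia.
    * by ifs; apply: Cvert => //; lia.
    * subst t; ifs.
      apply: (@Ctrans _ _ _ _ _ r.+1 p); first by apply: Cvert => //; lia.
      apply: Cvert; [lia | done | ].
      by rewrite H1 Iv; move: hv; rewrite H0.
  + move=> ? hh h1 h2 h3; subst; rewrite ?Hh ?Hi in hh h1 h2; rewrite /fH.
    by ifs; apply: Ccup.
  + move=> c ? ? hh h1 h2 h3; subst; rewrite ?Hh ?Hi in hh h1 h2; rewrite /fH.
    case: (ltngtP c r) => e1.
    * by ifs; apply: Ccap.
    * by ifs; apply: Ccap.
    * by subst; ifs; apply: Ccap; rewrite ?Iv.
Qed.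
End DelH.
Lemma nth_del (T : Type) (x0 : T) (u v : seq T) y t :
  nth x0 (u ++ v) t = nth x0 (u ++ y :: v) (if t < size u then t else t.+1).
Proof.
rewrite !nth_cat; case: (ltnP t (size u)) => h; first by rewrite h.
have -> : (t.+1 < size u) = false by lia.
by have -> : t.+1 - size u = (t - size u).+1 by lia.
Qed.

Lemma delV' n (u v : seq letter) l (s1 s2 : seq bool) b : size s1 = size u -> b != l.2 ->
  nl n.+1 (u ++ l :: v) (s1 ++ b :: s2) = nl n.+1 (u ++ v) (s1 ++ s2).
Proof.
move=> hs hb; apply: (@delV n _ _ _ _ (size u)).
- by rewrite !size_cat /=; lia.
- by rewrite size_cat /=; lia.
- move=> t; rewrite /horS /sgn_at (nth_del _ _ _ l) (nth_del _ _ _ b) hs !size_cat /=.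
  congr (_ && _); case: ifP => hc; apply/idP/idP => ?; lia.
- by move=> t p; rewrite /Defs.inv /gen_at (nth_del _ _ _ l).
- rewrite /horS /sgn_at !nth_cat hs ltnn subnn /=.
  by rewrite (negbTE hb) andbF.
Qed.

Lemma delH' n (u v : seq letter) l (s1 s2 : seq bool) : size s1 = size u -> 1 <= l.1 <= n ->
  nl n.+1 (u ++ l :: l :: v) (s1 ++ l.2 :: l.2 :: s2) = (nl n.+1 (u ++ l :: v) (s1 ++ l.2 :: s2)).+1.
Proof.
move=> hs hl.
have ew : u ++ l :: l :: v = (u ++ [:: l]) ++ l :: v by rewrite -catA.
have ew' : u ++ l :: v = (u ++ [:: l]) ++ v by rewrite -catA.
have es : s1 ++ l.2 :: l.2 :: s2 = (s1 ++ [:: l.2]) ++ l.2 :: s2 by rewrite -catA.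
have es' : s1 ++ l.2 :: s2 = (s1 ++ [:: l.2]) ++ s2 by rewrite -catA.
have hsu : size (u ++ [:: l]) = (size u).+1 by rewrite size_cat addn1.
have hss : size (s1 ++ [:: l.2]) = (size u).+1 by rewrite size_cat addn1 hs.
have gr : forall k, k <= 1 -> nth (0, true) (u ++ l :: l :: v) (size u + k) = l.
  by move=> k hk; rewrite nth_cat ltnNge leq_addr /= addKn; case: k hk => [|[]].
have sr : forall k, k <= 1 -> nth false (s1 ++ l.2 :: l.2 :: s2) (size u + k) = l.2.
  by move=> k hk; rewrite nth_cat hs ltnNge leq_addr /= addKn; case: k hk => [|[]].
have g0 := gr 0 isT; have g1 := gr 1 isT; have s0 := sr 0 isT; have s1' := sr 1 isT.
rewrite addn0 in g0 s0; rewrite addn1 in g1 s1'.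
apply: (@delH n _ _ _ _ (size u)).
- by rewrite !size_cat /=; lia.
- by rewrite size_cat /=; lia.
- move=> t; rewrite ew es ew' es' /horS /sgn_at (nth_del _ _ _ l) (nth_del _ _ _ l.2) hss hsu !size_cat /=.
  congr (_ && _); case: ifP => hc; apply/idP/idP => ?; lia.
- by move=> t p; rewrite ew ew' /Defs.inv /gen_at (nth_del _ _ _ l) hsu.
- rewrite /horS /sgn_at g0 s0 eqxx andbT size_cat /=; lia.
- rewrite /horS /sgn_at g1 s1' eqxx andbT size_cat /=; lia.
- by move=> p; rewrite /Defs.inv /gen_at g0 g1.
- by rewrite /gen_at g0.
Qed.
Lemma twist n (al ga : seq letter) g (s1 s2 : seq bool) (tau : seq bool) :
  size s1 = size al -> 1 <= g <= n ->
  nl n.+1 (al ++ nseq (size tau) (g, true) ++ ga) (s1 ++ tau ++ s2) =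
  if count id tau == 0 then nl n.+1 (al ++ ga) (s1 ++ s2)
  else nl n.+1 (al ++ (g, true) :: ga) (s1 ++ true :: s2) + (count id tau).-1.
Proof.
move=> hs hg; set x := (g, true).
elim: (size tau).+1 {-2}tau (ltnSn (size tau)) => // k IH [|b t] /=; first by rewrite ltnS.
rewrite ltnS => hk.
case: b => /=; last first.
  rewrite (@delV' n al (nseq (size t) x ++ ga) x s1 (t ++ s2) false) //.
  by apply: IH.
case: t hk => [|c t] hk /=; first by rewrite addn0 addn0.
case: c hk => hk /=.
  rewrite (@delH' n al (nseq (size t) x ++ ga) x s1 (t ++ s2)) //.
  have := IH (true :: t) hk; rewrite /= => ->.
  by rewrite !add0n add1n addnS.
have e1 : al ++ [:: x, x & nseq (size t) x ++ ga] = (al ++ [:: x]) ++ x :: (nseq (size t) x ++ ga)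
  by rewrite -catA.
have e2 : s1 ++ [:: true, false & t ++ s2] = (s1 ++ [:: true]) ++ false :: (t ++ s2)
  by rewrite -catA.
rewrite e1 e2 delV' ?size_cat ?hs // -!catA /=.
by have := IH (true :: t) hk; rewrite /= => ->; rewrite !add0n.
Qed.
Local Open Scope ring_scope.

Lemma sum_tuple_cons (R : nmodType) k (F : seq bool -> R) :
  \sum_(S : k.+1.-tuple bool) F S = \sum_(S : k.-tuple bool) (F (false :: S) + F (true :: S)).
Proof.
rewrite (reindex (fun p : bool * k.-tuple bool => [tuple of p.1 :: p.2])) /=; last first.
  exists (fun S : k.+1.-tuple bool => (thead S, [tuple of behead S])).
  - by case=> b t _ /=; congr (_, _); apply: val_inj.
  - by move=> S _; apply: val_inj => /=; rewrite [in RHS](tuple_eta S).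
rewrite -(pair_big xpredT xpredT (fun b (t : k.-tuple bool) => F (b :: t))) /=.
by rewrite big_bool /= addrC -big_split.
Qed.

Lemma sum_tuple0 (R : nmodType) (F : seq bool -> R) :
  \sum_(S : 0.-tuple bool) F S = F [::].
Proof.
rewrite (big_pred1 [tuple]) //= => t; rewrite tuple0; apply/esym/eqP; exact: tuple0.
Qed.

Lemma sum_tuple_cat (R : nmodType) a b (F : seq bool -> R) :
  \sum_(S : (a + b)%N.-tuple bool) F S =
  \sum_(S1 : a.-tuple bool) \sum_(S2 : b.-tuple bool) F (S1 ++ S2).
Proof.
elim: a F => [|a IH] F; first by rewrite (sum_tuple0 (fun s => \sum_(S2 : b.-tuple bool) F (s ++ S2))).
rewrite addSn sum_tuple_cons (IH (fun s => F (false :: s) + F (true :: s))).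
rewrite (@sum_tuple_cons _ _ (fun s => \sum_(S2 : b.-tuple bool) F (s ++ S2))) /=.
by apply: eq_bigr => S1 _; rewrite -big_split.
Qed.
Lemma svar_neq0 : svar != 0.
Proof. by rewrite /svar /tof tofrac_eq0 polyX_eq0. Qed.

Definition delta : laurent := - (svar + svar^-1).
Definition GP (e : nat) : {poly int} := \sum_(k < e) (- 'X^2) ^+ k.

Lemma one_sdelta : 1 + svar * delta = - svar ^+ 2.
Proof.
rewrite /delta mulrN mulrDr mulfV ?svar_neq0 //.
by rewrite opprD addrA addrC addrA addNr add0r expr2.
Qed.

Lemma tof_GPS e : tof (GP e.+1) = tof (GP e) + (- svar ^+ 2) ^+ e.
Proof. by rewrite /GP big_ord_recr /= /tof rmorphD rmorphXn rmorphN rmorphXn. Qed.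

Lemma sum_pow_count (R : pzRingType) (a : R) e :
  \sum_(t : e.-tuple bool) a ^+ (count id t) = (1 + a) ^+ e.
Proof.
elim: e => [|e IH]; first by rewrite (sum_tuple0 (fun s => a ^+ count id s)) expr0.
rewrite (@sum_tuple_cons _ _ (fun s => a ^+ count id s)) exprS -IH mulr_sumr; apply: eq_bigr => t _ /=.
by rewrite add0n add1n exprS mulrDl mul1r addrC.
Qed.

Lemma tau_sum (Xv Yv : laurent) e :
  \sum_(t : e.-tuple bool)
     (if count id t == 0%N then Xv else Yv * svar ^+ (count id t) * delta ^+ (count id t).-1)
  = Xv + Yv * svar * tof (GP e).
Proof.
elim: e => [|e IH].
  by rewrite (sum_tuple0 (fun t => if count id t == 0%N then Xv else Yv * svar ^+ (count id t) * delta ^+ (count id t).-1)) /= /GP big_ord0 /tof rmorph0 mulr0 addr0.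
rewrite (@sum_tuple_cons _ _ (fun t => if count id t == 0%N then Xv else Yv * svar ^+ (count id t) * delta ^+ (count id t).-1)) big_split /= IH tof_GPS mulrDr addrA; congr (_ + _).
rewrite -one_sdelta -sum_pow_count mulr_sumr; apply: eq_bigr => t _.
by rewrite add1n /= exprS exprMn !mulrA.
Qed.
Definition JT n w (s : seq bool) : laurent :=
  (-1) ^ ((count (fun l : letter => ~~ l.2) w)%:Z - (count (fun l : letter => l.2) w)%:Z)
  * svar ^ ((count id s)%:Z - 2 * (count (fun l : letter => ~~ l.2) w)%:Z
             + (count (fun l : letter => l.2) w)%:Z)
  * delta ^+ (nl n w s).-1.

Lemma jonesE n w : jones n.+1 w = \sum_(S : (size w).-tuple bool) JT n.+1 w S.
Proof. by []. Qed.

Lemma sum_tuple_eq (R : nmodType) m m' (F : seq bool -> R) : m = m' ->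
  \sum_(S : m.-tuple bool) F S = \sum_(S : m'.-tuple bool) F S.
Proof. by move=> ->. Qed.

Lemma nl_gt0 n w s : (0 < nl n.+1 w s)%N.
Proof.
rewrite /nl /n_comp_mem; apply/card_gt0P.
exists (fingraph.root (G n.+1 w s) (ord0, ord0)); rewrite !inE /= andbT.
exact: (roots_root (sym_connect_sym (@G_sym n w s))).
Qed.

Section Main.
Variables (n : nat) (al ga : seq letter) (g : nat).
Hypothesis Hg : (1 <= g <= n)%N.

Definition Pn : int := ((count (fun l : letter => ~~ l.2) al) + (count (fun l : letter => ~~ l.2) ga))%N%:Z.
Definition Qn : int := ((count (fun l : letter => l.2) al) + (count (fun l : letter => l.2) ga))%N%:Z.
Definition KK (s1 s2 : seq bool) : laurent :=
  (-1) ^ (Pn - Qn) * svar ^ (((count id s1) + (count id s2))%N%:Z - 2 * Pn + Qn).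
Definition LB (s1 s2 : seq bool) := nl n.+1 (al ++ ga) (s1 ++ s2).
Definition LE (s1 s2 : seq bool) := nl n.+1 (al ++ (g, true) :: ga) (s1 ++ true :: s2).
Definition XB := \sum_(s1 : (size al).-tuple bool) \sum_(s2 : (size ga).-tuple bool)
   KK s1 s2 * delta ^+ (LB s1 s2).-1.
Definition XE := \sum_(s1 : (size al).-tuple bool) \sum_(s2 : (size ga).-tuple bool)
   KK s1 s2 * delta ^+ (LE s1 s2).-1.

Lemma JT_split e s1 tau s2 : size s1 = size al -> size tau = e ->
  JT n.+1 (al ++ nseq e (g, true) ++ ga) (s1 ++ tau ++ s2) = (-svar) ^+ e * KK s1 s2 *
   (if count id tau == 0%N then delta ^+ (LB s1 s2).-1
    else delta ^+ (LE s1 s2).-1 * svar ^+ count id tau * delta ^+ (count id tau).-1).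
Proof.
move=> hs ht; rewrite /JT; have := @twist n al ga g s1 s2 tau hs Hg; rewrite ht => ->.
rewrite !count_cat !count_nseq /= mul0n mul1n add0n.
set c1 := count id s1; set ct := count id tau; set c2 := count id s2.
have E1 : (-1) ^ ((count (fun l : letter => ~~ l.2) al + count (fun l : letter => ~~ l.2) ga)%N%:Z
    - (count (fun l : letter => l.2) al + (e + count (fun l : letter => l.2) ga))%N%:Z)
    = (-1) ^ (Pn - Qn) * (-1) ^+ e :> laurent.
  have -> : (count (fun l : letter => ~~ l.2) al + count (fun l : letter => ~~ l.2) ga)%N%:Z
    - (count (fun l : letter => l.2) al + (e + count (fun l : letter => l.2) ga))%N%:Z
    = (Pn - Qn) + (- (e%:Z)) by rewrite /Pn /Qn; lia.
  by rewrite expfzDr ?oppr_eq0 ?oner_eq0 // -exprnN invr_sign.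
have E2 : svar ^ ((c1 + (ct + c2))%N%:Z
    - 2 * (count (fun l : letter => ~~ l.2) al + count (fun l : letter => ~~ l.2) ga)%N%:Z
    + (count (fun l : letter => l.2) al + (e + count (fun l : letter => l.2) ga))%N%:Z)
    = svar ^ ((c1 + c2)%N%:Z - 2 * Pn + Qn) * svar ^+ ct * svar ^+ e.
  have -> : (c1 + (ct + c2))%N%:Z
    - 2 * (count (fun l : letter => ~~ l.2) al + count (fun l : letter => ~~ l.2) ga)%N%:Z
    + (count (fun l : letter => l.2) al + (e + count (fun l : letter => l.2) ga))%N%:Z
    = ((c1 + c2)%N%:Z - 2 * Pn + Qn) + ct%:Z + e%:Z by rewrite /Pn /Qn; lia.
  by rewrite !expfzDr ?svar_neq0 // -!exprnP.
rewrite E1 E2 /KK -/(LB s1 s2) -/(LE s1 s2).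
have -> : (- svar) ^+ e = (-1) ^+ e * svar ^+ e by rewrite -exprMn mulN1r.
clear E1 E2; rewrite {}/c1 {}/c2.
case: eqP => hc.
  by rewrite hc expr0 mulr1; ring.
have hL := nl_gt0 n (al ++ (g, true) :: ga) (s1 ++ true :: s2).
rewrite -/(LE s1 s2) in hL.
have -> : (LE s1 s2 + ct.-1).-1 = ((LE s1 s2).-1 + ct.-1)%N by lia.
rewrite exprD; ring.
Qed.

Lemma main_formula e :
  jones n.+1 (al ++ nseq e (g, true) ++ ga) = (-svar) ^+ e * (XB + svar * tof (GP e) * XE).
Proof.
set w := al ++ nseq e (g, true) ++ ga.
rewrite jonesE.
have hsz : size w = (size al + (e + size ga))%N by rewrite !size_cat size_nseq.
rewrite (@sum_tuple_eq _ _ _ (JT n.+1 w) hsz) sum_tuple_cat.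
transitivity (\sum_(s1 : (size al).-tuple bool) \sum_(s2 : (size ga).-tuple bool)
   \sum_(t : e.-tuple bool) JT n.+1 w (s1 ++ t ++ s2)).
  apply: eq_bigr => s1 _.
  rewrite (@sum_tuple_cat _ _ _ (fun s => JT n.+1 w (s1 ++ s))).
  exact: exchange_big.
transitivity (\sum_(s1 : (size al).-tuple bool) \sum_(s2 : (size ga).-tuple bool)
   ((-svar) ^+ e * (KK s1 s2 * delta ^+ (LB s1 s2).-1)
    + ((-svar) ^+ e * svar * tof (GP e)) * (KK s1 s2 * delta ^+ (LE s1 s2).-1))).
  apply: eq_bigr => s1 _; apply: eq_bigr => s2 _.
  transitivity (\sum_(t : e.-tuple bool) (-svar) ^+ e * KK s1 s2 *
     (if count id t == 0%N then delta ^+ (LB s1 s2).-1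
      else delta ^+ (LE s1 s2).-1 * svar ^+ count id t * delta ^+ (count id t).-1)).
    by apply: eq_bigr => t _; rewrite JT_split ?size_tuple.
  rewrite -mulr_sumr tau_sum; ring.
rewrite mulrDr mulrA mulrA /XB /XE !mulr_sumr -big_split /=.
apply: eq_bigr => s1 _; rewrite !mulr_sumr -big_split /=.
by apply: eq_bigr.
Qed.
End Main.
Definition ev (P : {poly int}) : 'F_7 := (map_poly (fun z : int => z%:~R) P).[2%:R].
Lemma evD P Q : ev (P + Q) = ev P + ev Q.
Proof. by rewrite /ev rmorphD hornerD. Qed.
Lemma evM P Q : ev (P * Q) = ev P * ev Q.
Proof. by rewrite /ev rmorphM hornerM. Qed.
Lemma evX : ev 'X = 2%:R.
Proof. by rewrite /ev map_polyX hornerX. Qed.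
Lemma evXn k : ev ('X ^+ k) = 2%:R ^+ k.
Proof. by rewrite /ev rmorphXn /= map_polyX hornerXn. Qed.
Lemma ev1 : ev 1 = 1.
Proof. by rewrite /ev rmorph1 hornerC. Qed.
Lemma evN1 : ev (-1) = -1.
Proof. by rewrite /ev rmorphN rmorph1 hornerN hornerC. Qed.
Lemma F2_neq0 : (2%:R : 'F_7) != 0. Proof. vm_compute. reflexivity. Qed.
Lemma F24 : (2%:R * 4%:R : 'F_7) = 1. Proof. apply/eqP. vm_compute. reflexivity. Qed.
Lemma F3 : (- (2%:R + 4%:R) : 'F_7) = 1. Proof. apply/eqP. vm_compute. reflexivity. Qed.
Lemma F12_neq0 : (1 + 2%:R : 'F_7) != 0. Proof. vm_compute. reflexivity. Qed.
Lemma F2V : (2%:R : 'F_7)^-1 = 4%:R.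
Proof. by apply: (mulfI F2_neq0); rewrite mulfV ?F2_neq0 // F24. Qed.

Definition lval (x : laurent) (c : 'F_7) :=
  exists (N : nat) (P : {poly int}), x * svar ^+ N = tof P /\ ev P = c * 2%:R ^+ N.

Lemma lval_tof P : lval (tof P) (ev P).
Proof. by exists 0%N, P; rewrite !expr0 !mulr1. Qed.

Lemma tofX k : tof ('X ^+ k) = svar ^+ k.
Proof. by rewrite /tof rmorphXn. Qed.

Lemma lval_add x y c d : lval x c -> lval y d -> lval (x + y) (c + d).
Proof.
move=> [N [P [hP eP]]] [M [Q [hQ eQ]]]; exists (N + M)%N, (P * 'X ^+ M + Q * 'X ^+ N).
split.
  move: hP hQ; rewrite /tof /svar /tof => hP hQ.
  rewrite rmorphD !rmorphM !rmorphXn /= -hP -hQ exprD; ring.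
by rewrite evD !evM !evXn eP eQ exprD; ring.
Qed.

Lemma lval_mul x y c d : lval x c -> lval y d -> lval (x * y) (c * d).
Proof.
move=> [N [P [hP eP]]] [M [Q [hQ eQ]]]; exists (N + M)%N, (P * Q).
split.
  move: hP hQ; rewrite /tof /svar /tof => hP hQ.
  by rewrite rmorphM /= -hP -hQ exprD; ring.
by rewrite evM eP eQ exprD; ring.
Qed.

Lemma lval_N1 : lval (-1) (-1).
Proof. by have := lval_tof (-1); rewrite evN1 /tof rmorphN rmorph1. Qed.

Lemma lval_svar : lval svar 2%:R.
Proof. by have := lval_tof 'X; rewrite evX. Qed.

Lemma lval_svarV : lval (svar^-1) (2%:R^-1).
Proof.
exists 1%N, 1; split; first by rewrite expr1 mulVf ?svar_neq0 // /tof rmorph1.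
by rewrite ev1 expr1 mulVf ?F2_neq0.
Qed.

Lemma lval_opp x c : lval x c -> lval (- x) (- c).
Proof. by move=> h; rewrite -mulN1r -(mulN1r c); apply: lval_mul => //; apply: lval_N1. Qed.

Lemma lval_delta : lval delta 1.
Proof.
rewrite -F3 -F2V; apply: lval_opp; apply: lval_add; [exact: lval_svar | exact: lval_svarV].
Qed.

Lemma lval_exp x c k : lval x c -> lval (x ^+ k) (c ^+ k).
Proof.
move=> h; elim: k => [|k IH]; first by rewrite !expr0; have := lval_tof 1; rewrite ev1 /tof rmorph1.
by rewrite !exprS; apply: lval_mul.
Qed.

Lemma lval_expz x c (z : int) : lval x c -> lval x^-1 c^-1 -> lval (x ^ z) (c ^ z).
Proof.
move=> h hV; case: z => k; first exact: lval_exp.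
by rewrite NegzE -!exprnN -!exprVn; apply: lval_exp.
Qed.

Lemma lval_sum (I : finType) (F : I -> laurent) (c : I -> 'F_7) :
  (forall i, lval (F i) (c i)) -> lval (\sum_i F i) (\sum_i c i).
Proof.
move=> h; apply: (big_rec2 (fun x y => lval y x)).
  by have := lval_tof 0; rewrite /ev rmorph0 horner0 /tof rmorph0.
by move=> i y1 y2 _ hy; apply: lval_add.
Qed.

Lemma lval_neq0 x c : lval x c -> c != 0 -> x != 0.
Proof.
move=> [N [P [hP eP]]] hc; apply/eqP => hx; move: hP; rewrite hx mul0r => /esym /eqP.
rewrite /tof tofrac_eq0 => /eqP hP0; move: eP; rewrite hP0 /ev rmorph0 horner0 => /esym /eqP.
by rewrite mulf_eq0 (negbTE hc) expf_eq0 (negbTE F2_neq0) andbF.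
Qed.

Lemma jones_neq0 n w : jones n.+1 w != 0.
Proof.
set p : int := (count (fun l : letter => ~~ l.2) w)%:Z.
set q : int := (count (fun l : letter => l.2) w)%:Z.
have H : lval (jones n.+1 w) (\sum_(S : (size w).-tuple bool)
     (-1) ^ (p - q) * 2%:R ^ ((count id S)%:Z - 2 * p + q)).
  rewrite jonesE; apply: lval_sum => S; rewrite /JT -/p -/q.
  rewrite -[X in lval _ X]mulr1; apply: lval_mul; last first.
    by rewrite -(expr1n _ (nl n.+1 w S).-1); apply: lval_exp; apply: lval_delta.
  apply: lval_mul; apply: lval_expz.
  - exact: lval_N1.
  - by rewrite !invrN1; apply: lval_N1.
  - exact: lval_svar.
  - exact: lval_svarV.
apply: (lval_neq0 H).
have -> : \sum_(S : (size w).-tuple bool) (-1) ^ (p - q) * 2%:R ^ ((count id S)%:Z - 2 * p + q)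
   = (-1) ^ (p - q) * 2%:R ^ (- 2 * p + q) * \sum_(S : (size w).-tuple bool) (2%:R : 'F_7) ^+ count id S.
  rewrite mulr_sumr; apply: eq_bigr => S _.
  have -> : (count id S)%:Z - 2 * p + q = (- 2 * p + q) + (count id S)%:Z by ring.
  by rewrite (@expfzDr _ 2%:R) ?F2_neq0 // -exprnP mulrA.
rewrite sum_pow_count !mulf_neq0 //.
- by rewrite expfz_eq0 negb_and oppr_eq0 oner_eq0 orbT.
- by rewrite expfz_eq0 negb_and F2_neq0 orbT.
- by rewrite expf_eq0 (negbTE F12_neq0) andbF.
Qed.
Definition islau (x : laurent) := exists c, lval x c.

Lemma islau_add x y : islau x -> islau y -> islau (x + y).
Proof. by move=> [c hc] [d hd]; exists (c + d); apply: lval_add. Qed.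
Lemma islau_mul x y : islau x -> islau y -> islau (x * y).
Proof. by move=> [c hc] [d hd]; exists (c * d); apply: lval_mul. Qed.
Lemma islau_sum (I : finType) (F : I -> laurent) : (forall i, islau (F i)) -> islau (\sum_i F i).
Proof.
move=> h; apply: (big_ind islau) => //; last exact: islau_add.
by exists 0; have := lval_tof 0; rewrite /ev rmorph0 horner0 /tof rmorph0.
Qed.

Lemma islau_KKd al ga s1 s2 L : islau (KK al ga s1 s2 * delta ^+ L).
Proof.
apply: islau_mul; last by exists (1 ^+ L); apply: lval_exp; apply: lval_delta.
apply: islau_mul.
  exists ((-1) ^ (Pn al ga - Qn al ga)); apply: lval_expz; first exact: lval_N1.
  by rewrite !invrN1; apply: lval_N1.
by eexists; apply: lval_expz; [exact: lval_svar | exact: lval_svarV].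
Qed.

Lemma islau_XB n al ga : islau (XB n al ga).
Proof. by apply: islau_sum => s1; apply: islau_sum => s2; apply: islau_KKd. Qed.
Lemma islau_XE n al ga g : islau (XE n al ga g).
Proof. by apply: islau_sum => s1; apply: islau_sum => s2; apply: islau_KKd. Qed.

Lemma GPS k : GP k.+1 = GP k + (- 'X ^+ 2) ^+ k.
Proof. by rewrite /GP big_ord_recr. Qed.

Lemma GP_add a d : GP (a + d) = GP a + (- 'X ^+ 2) ^+ a * GP d.
Proof.
elim: d => [|d IH]; first by rewrite addn0 /GP big_ord0 mulr0 addr0.
by rewrite addnS !GPS IH mulrDr addrA exprD.
Qed.

Lemma GP_succ_l d : GP d.+1 = 1 + (- 'X ^+ 2) * GP d.
Proof.
elim: d => [|d IH]; first by rewrite GPS /GP big_ord0 add0r expr0 mulr0 addr0.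
by rewrite {1}GPS {1}IH GPS mulrDr addrA [(- _) ^+ d.+1]exprS.
Qed.

Lemma GP_neq0 d : GP d.+1 != 0.
Proof.
apply/eqP => h; have := congr1 (fun p : {poly int} => p.[0]) (GP_succ_l d).
by rewrite h /= !hornerE.
Qed.

Lemma Q_eventually (PB PE : {poly int}) : PB != 0 \/ PE != 0 ->
  exists K : nat, forall k, (K <= k)%N -> PB + 'X * GP k * PE != 0.
Proof.
move=> hne; have [hE|hE] := eqVneq PE 0.
  by exists 0%N => k _; rewrite hE mulr0 addr0; case: hne => //; rewrite hE eqxx.
case: (classic (exists k0, PB + 'X * GP k0 * PE = 0)) => [[k0 hk0]|hno]; last first.
  by exists 0%N => k _; apply/eqP => hk; apply: hno; exists k.
exists k0.+1 => k hk; apply/eqP => hk1.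
have hd : k = (k0 + (k - k0).-1.+1)%N by lia.
move: hk1; rewrite hd GP_add => hk1.
move: hk1; rewrite mulrDr mulrDl addrA hk0 add0r => /eqP.
rewrite !mulf_eq0 polyX_eq0 (negbTE hE) (negbTE (GP_neq0 _)) orbF /=.
by rewrite expf_eq0 oppr_eq0 expf_eq0 polyX_eq0 !andbF.
Qed.

Lemma enum_split k (j : 'I_k) : enum 'I_k = take j (enum 'I_k) ++ j :: drop j.+1 (enum 'I_k).
Proof.
rewrite -{1}(cat_take_drop j (enum 'I_k)) (drop_nth j) ?size_enum_ord ?ltn_ord //.
by rewrite nth_ord_enum.
Qed.

Lemma bword_split k (i : 'I_k -> nat) (j : 'I_k) (a : 'I_k -> int) (m : nat) :
  bword i (fun h => if h == j then m%:Z else a h) =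
  flatten [seq gpow (i h) (a h) | h <- take j (enum 'I_k)] ++ nseq m (i j, true) ++
  flatten [seq gpow (i h) (a h) | h <- drop j.+1 (enum 'I_k)].
Proof.
have hu := enum_uniq 'I_k; rewrite [in X in uniq X](enum_split j) cat_uniq /= in hu.
case/and4P: hu => _ /norP [hj1 _] hj2 _.
rewrite /bword {1}(enum_split j) map_cat flatten_cat /= eqxx; congr (flatten _ ++ _ ++ flatten _).
- apply/eq_in_map => h hh /=; case: eqP => // ehj; subst h.
  by rewrite hh in hj1.
- apply/eq_in_map => h hh /=; case: eqP => // ehj; subst h.
  by rewrite hh in hj2.
Qed.
Theorem proposition1p4 (n k : nat) (i : 'I_k -> nat) (j : 'I_k) (a : 'I_k -> int) :
  (2 <= n)%N ->
  (forall h, (1 <= i h <= n.-1)%N) ->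
  let V := fun e : int => jones n (bword i (fun h => if h == j then e else a h)) in
  (exists E : int, forall e : int, E <= e -> is_poly_in_s (V e)) /\
  (forall M : int, exists E : int, forall e : int, E <= e ->
      exists d : int, has_sdeg (V e) d /\ M <= d).
Proof.
case: n => [|n] // hn hi V.
set g := i j.
have hg : (1 <= g <= n)%N by have := hi j.
set al := flatten [seq gpow (i h) (a h) | h <- take j (enum 'I_k)].
set ga := flatten [seq gpow (i h) (a h) | h <- drop j.+1 (enum 'I_k)].
have hV : forall m : nat, V m%:Z = jones n.+1 (al ++ nseq m (g, true) ++ ga).
  by move=> m; rewrite /V bword_split.
have hF := main_formula al ga hg.
have [cB [NB [PB0 [hB _]]]] := islau_XB n al ga.
have [cE [NE [PE0 [hE _]]]] := islau_XE n al ga g.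
set XB0 := XB n al ga in hB hF; set XE0 := XE n al ga g in hE hF.
set N := (NB + NE)%N.
set PB := PB0 * 'X ^+ NE; set PE := PE0 * 'X ^+ NB.
have hB' : XB0 * svar ^+ N = tof PB.
  by rewrite /N exprD mulrA hB /PB /tof rmorphM rmorphXn.
have hE' : XE0 * svar ^+ N = tof PE.
  by rewrite /N addnC exprD mulrA hE /PE /tof rmorphM rmorphXn.
set Q := fun m => PB + 'X * GP m * PE.
have key : forall m : nat, V m%:Z * svar ^+ N = tof ((- 'X) ^+ m * Q m).
  move=> m; rewrite hV hF.
  transitivity ((- svar) ^+ m * (XB0 * svar ^+ N + svar * tof (GP m) * (XE0 * svar ^+ N))).
    by ring.
  rewrite hB' hE' /Q /svar /tof.
  by rewrite !(rmorphM, rmorphXn, rmorphD, rmorphN).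
have nz0 : PB != 0 \/ PE != 0.
  have := jones_neq0 n (al ++ ga).
  have -> : al ++ ga = al ++ nseq 0 (g, true) ++ ga by [].
  rewrite hF expr0 mul1r /GP big_ord0 /tof rmorph0 mulr0 mul0r addr0 => hXB.
  left; apply/eqP => h0; move: hB'; rewrite h0 /tof rmorph0 => /eqP.
  by rewrite mulf_eq0 expf_eq0 (negbTE svar_neq0) andbF orbF (negbTE hXB).
have [K hK] := Q_eventually nz0.
have hsplit : forall m : nat, (N <= m)%N ->
    V m%:Z = svar ^ (m%:Z - N%:Z) * tof ((-1) ^+ m * Q m).
  move=> m hm; apply: (mulIf (expf_neq0 N svar_neq0)); rewrite key.
  rewrite mulrAC (exprnP svar N) -expfzDr ?svar_neq0 //.
  have -> : m%:Z - N%:Z + N%:Z = m%:Z by ring.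
  rewrite -exprnP.
  have -> : (- 'X) ^+ m * Q m = 'X ^+ m * ((-1) ^+ m * Q m) :> {poly int}.
    by rewrite mulrA -exprMn mulrN1.
  by rewrite /tof rmorphM rmorphXn.
split.
  exists N%:Z => e; case: e => m; last by [].
  rewrite lez_nat => hm.
  exists ((-1) ^+ m * 'X ^+ (m - N) * Q m).
  apply: (mulIf (expf_neq0 N svar_neq0)); rewrite key.
  have -> : (- 'X) ^+ m * Q m = (-1) ^+ m * 'X ^+ (m - N) * Q m * 'X ^+ N :> {poly int}.
    rewrite [RHS]mulrAC -(mulrA _ ('X ^+ (m - N))) -exprD subnK //.
    by rewrite -exprMn mulN1r.
  by rewrite /tof rmorphM rmorphXn.
move=> M.
exists (K + N + `|M|)%N%:Z => e; case: e => m; last by [].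
rewrite lez_nat => hm.
have hQ : Q m != 0 by apply: hK; lia.
set P := (-1) ^+ m * Q m.
have hP : P != 0 by rewrite /P mulf_neq0 // signr_eq0.
exists ((m%:Z - N%:Z) + ((size P)%:Z - 1)); split.
  exists P, (m%:Z - N%:Z); split => //.
  by apply: hsplit; lia.
have : (0 < size P)%N by rewrite size_poly_gt0.
move=> hs; lia.
Qed.
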